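(* Let $Y\sim N(\theta,1)$ with $\theta\in\mathbb{R}$, let $a>0$ and $\nu_a=\mathbb{E}(Z^2\mid|Z|\ge a)$ for $Z\sim N(0,1)$. Let $A=(Y^2-\nu_a)\mathbb{1}(|Y|\ge a)$ and $B=Y^2-1$. Then the distribution of $A-B$ is stochastically decreasing in $|\theta|$, i.e. if $|\theta|\le|\theta'|$ then $\mathbb{P}_{\theta'}(A-B\le t)\ge\mathbb{P}_{\theta}(A-B\le t)$ for all $t\in\mathbb{R}$. *)

(* Defs.v *)
From HB Require Import structures.
From mathcomp Require Import all_boot all_order all_algebra.
From mathcomp Require Import all_classical all_reals all_analysis.
Set Implicit Arguments. Unset Strict Implicit. Unset Printing Implicit Defensive.
Import Order.TTheory GRing.Theory Num.Theory.
Local Open Scope classical_set_scope.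
Local Open Scope ring_scope.

(* Law of Z ~ N(0,1) / Y ~ N(theta,1): the library's normal probability measure
   normal_prob m s (on R, with density normal_pdf m s w.r.t. Lebesgue measure). *)

Definition tail_set {R : realType} (a : R) : set R := [set z | a <= `|z|].

Definition nu {R : realType} (a : R) : R :=
  fine (\int[normal_prob 0 1]_(z in tail_set a) ((z ^+ 2)%:E))%E
  / fine (normal_prob 0 1 (tail_set a)).

Definition statA {R : realType} (a y : R) : R :=
  (y ^+ 2 - nu a) * (\1_(tail_set a) y).

Definition statB {R : realType} (y : R) : R := y ^+ 2 - 1.

Definition cdf_AmB {R : realType} (a theta t : R) : \bar R :=
  normal_prob theta 1 [set y | statA a y - statB y <= t].

(* Main.v *)
Require Import Defs.
From HB Require Import structures.
From mathcomp Require Import all_boot all_order all_algebra.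
From mathcomp Require Import all_classical all_reals all_analysis.
From mathcomp Require Import measurable_realfun.
From mathcomp Require Import lra ring.
Import Order.TTheory GRing.Theory Num.Theory.
Local Open Scope classical_set_scope.
Local Open Scope ring_scope.

Section S.
Context {R : realType}.
Local Notation mu := (@lebesgue_measure R).
Local Open Scope ereal_scope.

Lemma normal_density (f : R -> \bar R) (E : set R) :
  measurable E -> measurable_fun E f -> (forall x, 0 <= f x) ->
  \int[normal_prob 0 1]_(x in E) f x =
  \int[mu]_(x in E) (f x * (normal_pdf 0 1 x)%:E).
Proof.
move=> mE mf f0.
have dom := @normal_prob_dominates R 0 1.
rewrite -(Radon_Nikodym_SigmaFinite.change_of_variables dom)//.
apply: ae_eq_integral => //.
- apply: emeasurable_funM => //.
  apply: measurable_funTS.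
  exact: measurable_int (Radon_Nikodym_SigmaFinite.f_integrable dom).
- apply: emeasurable_funM => //; apply/measurable_EFinP.
  by apply/measurable_funTS; exact: measurable_normal_pdf.
- apply: ae_eqe_mul2l.
  apply: (ae_eq_subset (A := setT)) => //.
  apply: integral_ae_eq => //.
  + exact: Radon_Nikodym_SigmaFinite.f_integrable.
  + by apply/measurable_EFinP; exact: measurable_normal_pdf.
  + move=> A _ mA; rewrite -Radon_Nikodym_SigmaFinite.f_integral//.
Qed.
End S.
Section S1.
Context {R : realType}.
Local Notation mu := (@lebesgue_measure R).

Lemma lebesgue_reflect (c : R) (A : set R) : measurable A ->
  pushforward mu ((fun y : R => c - y) : _ -> measurableTypeR R) A = mu A.
Proof.
move=> mA.
have mf : measurable_fun [set: measurableTypeR R] ((fun y : R => c - y) : _ -> measurableTypeR R).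
  exact: measurable_funB.
apply/esym/lebesgue_measure_unique => //=.

move=> _ [[a b]] _ <-.
rewrite /pushforward.
have -> : (fun y : R => c - y) @^-1` `]a, b]%classic = `[c - b, c - a[%classic.
  apply/seteqP; split => x /=; rewrite !in_itv/= => /andP[h1 h2];
    apply/andP; split; lra.
rewrite !lebesgue_measure_itv/= !lte_fin.
have -> : (c - b < c - a) = (a < b) by apply/idP/idP => h; lra.
by case: ifP => // _; rewrite -EFinD; congr EFin; lra.
Qed.
End S1.
Section S2.
Context {R : realType}.
Local Notation mu := (@lebesgue_measure R).
Local Open Scope ereal_scope.

Lemma integral_reflect (c : R) (g : R -> \bar R) :
  measurable_fun [set: R] g -> (forall x, 0 <= g x) ->
  \int[mu]_x g (c - x)%R = \int[mu]_x g x.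
Proof.
move=> mg g0.
have mf : measurable_fun [set: measurableTypeR R] ((fun y : R => c - y)%R : _ -> measurableTypeR R).
  exact: measurable_funB.
have := @ge0_integral_pushforward _ _ _ _ R _ mf mu setT g measurableT mg (fun y _ => g0 y).
rewrite preimage_setT => <-.
by apply: eq_measure_integral => //= A mA _; rewrite lebesgue_reflect.
Qed.
End S2.
Section S3.
Context {R : realType}.
Lemma pdf1E (th y : R) : normal_pdf th 1 y =
  normal_peak 1 * expR (- (y - th) ^+ 2 / (1 ^+ 2 *+ 2)).
Proof. by rewrite /normal_pdf oner_eq0. Qed.

Lemma pdf_le (a b y : R) : (y - a) ^+ 2 <= (y - b) ^+ 2 ->
  normal_pdf b 1 y <= normal_pdf a 1 y.
Proof.
move=> h; rewrite !pdf1E ler_wpM2l ?normal_peak_ge0// ler_expR.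
rewrite ler_pM2r ?lerN2//.
Qed.
Lemma pdf_reflect (m th y : R) :
  normal_pdf th 1 (2 * m - y) = normal_pdf (2 * m - th) 1 y.
Proof.
have e : (2 * m - y - th) ^+ 2 = (y - (2 * m - th)) ^+ 2 by ring.
by rewrite !pdf1E e.
Qed.
Local Notation mu := (@lebesgue_measure R).
Lemma normal_probE (th : R) (U : set R) :
  normal_prob th 1 U = (\int[mu]_x ((\1_U x * normal_pdf th 1 x)%:E))%E.
Proof.
rewrite /normal_prob integral_mkcond; apply: eq_integral => x _.
rewrite patchE indicE; case: (x \in U).
  by rewrite mul1r.
by rewrite mul0r.
Qed.
End S3.
Section S4.
Context {R : realType}.
Local Notation mu := (@lebesgue_measure R).

Lemma key (U : set R) (m th : R) : measurable U ->
  (forall y, 0 <= (th - m) * (y - m) -> U y -> U (2 * m - y)) ->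
  (normal_prob th 1 U <= normal_prob (2 * m - th) 1 U)%E.
Proof.
move=> mU hU.
set th' := 2 * m - th.
set G := fun (s y : R) => ((\1_U y * normal_pdf s 1 y)%:E : \bar R).
have G0 s y : (0 <= G s y)%E.
  by rewrite lee_fin mulr_ge0 ?normal_pdf_ge0.
have mG s : measurable_fun [set: R] (G s).
  apply/measurable_EFinP; apply: measurable_funM.
    exact: measurable_indic.
  exact: measurable_normal_pdf.
have mGr s : measurable_fun [set: R] (fun y => G s (2 * m - y)).
  apply: measurableT_comp => //; exact: measurable_funB.
have E2 s : (normal_prob s 1 U + normal_prob s 1 U =
    \int[mu]_y (G s y + G s (2 * m - y)%R))%E.
  rewrite ge0_integralD//; [|exact: mG|exact: mGr].
  by rewrite !normal_probE (integral_reflect (2 * m) (G s) (mG s) (G0 s)).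
have : (normal_prob th 1 U + normal_prob th 1 U <=
        normal_prob th' 1 U + normal_prob th' 1 U)%E.
  rewrite !E2; apply: ge0_le_integral => //.
  all: try (by move=> y _; rewrite adde_ge0).
  all: try (by apply: emeasurable_funD; [exact: mG|exact: mGr]).
  move=> y _; rewrite /G !pdf_reflect -/th' (_ : 2 * m - th' = th); last first.
    by rewrite /th'; ring.
  rewrite -!EFinD lee_fin !indicE.
  have P1 : 0 <= (th - m) * (y - m) -> normal_pdf th' 1 y <= normal_pdf th 1 y.
    move=> h; apply: pdf_le; rewrite /th'.
    have : 0 <= (y - (2 * m - th)) ^+ 2 - (y - th) ^+ 2 by nra.
    by rewrite subr_ge0.
  have P2 : (th - m) * (y - m) <= 0 -> normal_pdf th 1 y <= normal_pdf th' 1 y.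
    move=> h; apply: pdf_le; rewrite /th'.
    have : 0 <= (y - th) ^+ 2 - (y - (2 * m - th)) ^+ 2 by nra.
    by rewrite subr_ge0.
  have [yU|yU] := boolP (y \in U); have [zU|zU] := boolP (2 * m - y \in U);
    rewrite ?mul1r ?mul0r ?add0r ?addr0 //.
  - by rewrite addrC.
  - apply: P2; rewrite leNgt; apply/negP => h.
    move/negP: zU; apply; rewrite inE; apply: hU; first exact: ltW.
    by move: yU; rewrite inE.
  - apply: P1; rewrite leNgt; apply/negP => h.
    move/negP: yU; apply; rewrite inE.
    have := hU (2 * m - y); rewrite (_ : 2 * m - (2 * m - y) = y); last by ring.
    apply; last by move: zU; rewrite inE.
    nra.
move=> h; rewrite leNgt; apply/negP => h'.
by have := lteD h' h'; rewrite ltNge h.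
Qed.
End S4.
Section S5.
Context {R : realType}.
Local Notation mu := (@lebesgue_measure R).

Lemma tail_meas (a : R) : measurable (tail_set a).
Proof.
have -> : tail_set a = (fun x : R => `|x|) @^-1` `[a, +oo[%classic.
  by apply/seteqP; split => x /=; rewrite in_itv/= andbT.
rewrite -[X in measurable X]setTI; apply: (normr_measurable measurableT); exact: measurable_itv.
Qed.

Lemma pdf_gt0 (y : R) : 0 < normal_pdf 0 1 y.
Proof. by rewrite pdf1E mulr_gt0 ?expR_gt0 ?normal_peak_gt0 ?oner_neq0. Qed.

Lemma tail_prob_gt0 (a : R) : 0 < a -> (0 < normal_prob 0 1 (tail_set a))%E.
Proof.
move=> a0.
set c := normal_pdf 0 1 (a + 1).
have c0 : 0 < c by exact: pdf_gt0.
apply: (@lt_le_trans _ _ (c%:E * mu `[a, (a + 1)%R]%classic)%E).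
  rewrite lebesgue_measure_itv/= lte_fin ltrDl ltr01 -EFinM lte_fin.
  by rewrite mulr_gt0// subr_gt0 ltrDl.
rewrite -integral_cst//.
apply: (@le_trans _ _ (\int[mu]_(x in `[a, (a + 1)%R]%classic) (normal_pdf 0 1 x)%:E)%E).
  apply: ge0_le_integral => //.
  all: try (by move=> x _; rewrite lee_fin ltW).
  all: try (by apply/measurable_EFinP; apply: measurable_funTS; exact: measurable_normal_pdf).
  move=> x; rewrite /= in_itv/= => /andP[h1 h2].
  rewrite lee_fin /c !pdf1E ler_wpM2l ?normal_peak_ge0// ler_expR.
  rewrite ler_pM2r ?lerN2 ?subr0; last by rewrite expr1n invr_gt0.
  by rewrite ler_sqr ?nnegrE; lra.
apply: ge0_subset_integral => //.
- exact: tail_meas.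
- apply/measurable_EFinP; apply: measurable_funTS; exact: measurable_normal_pdf.
- by move=> x _; rewrite lee_fin normal_pdf_ge0.
- move=> x; rewrite /= in_itv/= => /andP[h1 h2]; rewrite /tail_set /=.
  by rewrite ger0_norm //; lra.
Qed.
End S5.
Section S6.
Context {R : realType}.
Local Notation mu := (@lebesgue_measure R).

Lemma sq_pdf_bound (x : R) :
  x ^+ 2 * normal_pdf 0 1 x <=
  (4 * normal_peak 1 / normal_peak (Num.sqrt 2)) * normal_pdf 0 (Num.sqrt 2) x.
Proof.
have s0 : Num.sqrt 2 != 0 :> R by rewrite gt_eqF// sqrtr_gt0.
have p0 : 0 < normal_peak (Num.sqrt 2 : R) by exact: normal_peak_gt0.
rewrite /normal_pdf oner_eq0 (negbTE s0) /normal_fun sqr_sqrtr ?ler0n // expr1n !subr0.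
set u := x ^+ 2 / 4.
have -> : - x ^+ 2 / (2 *+ 2) = - u by rewrite /u; field.
have -> : - x ^+ 2 / (1 *+ 2) = - u + - u.
  by rewrite /u; field.
rewrite expRD.
have h1 : 1 + u <= expR u := expR_ge1Dx u.
have h2 : expR (- u) * expR u = 1 by rewrite expRN mulVf// gt_eqF// expR_gt0.
have h3 : 0 < expR (- u) := expR_gt0 _.
have h4 : 0 <= u by rewrite /u divr_ge0// sqr_ge0.
have pk : 0 <= normal_peak (1 : R) := normal_peak_ge0 _.
set q := normal_peak (Num.sqrt 2 : R); set pk1 := normal_peak (1 : R).
set A := expR (- u).
have -> : 4 * pk1 / q * (q * A) = (4 * pk1 * A) * 1 by field; rewrite gt_eqF.
have -> : x ^+ 2 * (pk1 * (A * A)) = (4 * pk1 * A) * (u * A).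
  by rewrite /u; field.
apply: ler_wpM2l.
  by apply: mulr_ge0; [apply: mulr_ge0 => //|exact: ltW].
rewrite -h2 [u * _]mulrC; apply: ler_wpM2l; [exact: ltW|lra].
Qed.
End S6.
Section S7.
Context {R : realType}.
Local Notation mu := (@lebesgue_measure R).

Lemma nu_ge (a : R) : 0 < a -> a ^+ 2 <= nu a.
Proof.
move=> a0.
have mT := tail_meas a.
set P := normal_prob 0 1 (tail_set a).
set I := (\int[normal_prob 0 1]_(z in tail_set a) ((z ^+ 2)%:E))%E.
have P0 : (0 < P)%E := tail_prob_gt0 a a0.
have P1 : (P <= 1)%E := probability_le1 (normal_prob 0 1) mT.
have mX : measurable_fun (tail_set a) (fun z : R => (z ^+ 2)%:E).
  by apply/measurable_EFinP; exact: exprn_measurable.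
have IP : ((a ^+ 2)%:E * P <= I)%E.
  rewrite /P -integral_cst//; apply: ge0_le_integral => //.
  all: try (by move=> x _; rewrite lee_fin sqr_ge0).
  move=> x hx; rewrite lee_fin.
  have : a <= `|x| := hx.
  move=> h; rewrite -(real_normK (num_real x)) ler_sqr ?nnegrE//; exact: ltW.
set K := 4 * normal_peak 1 / normal_peak (Num.sqrt 2 : R).
have K0 : 0 <= K.
  by rewrite /K mulr_ge0 ?invr_ge0 ?normal_peak_ge0// mulr_ge0 ?normal_peak_ge0.
have Ifin : (I < +oo)%E.
  rewrite /I normal_density//; last by move=> x; rewrite lee_fin sqr_ge0.
  apply: (@le_lt_trans _ _ (\int[mu]_x ((K * normal_pdf 0 (Num.sqrt 2) x)%:E))%E).
    apply: (@le_trans _ _ (\int[mu]_(x in tail_set a) ((K * normal_pdf 0 (Num.sqrt 2) x)%:E))%E).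
      apply: ge0_le_integral => //.
      all: try (by move=> x _; rewrite -EFinM lee_fin mulr_ge0 ?sqr_ge0 ?normal_pdf_ge0).
      - apply: emeasurable_funM => //; apply/measurable_EFinP.
        by apply: measurable_funTS; exact: measurable_normal_pdf.
      - apply/measurable_EFinP; apply: measurable_funM => //.
        by apply: measurable_funTS; exact: measurable_normal_pdf.
      by move=> x _; rewrite -EFinM lee_fin sq_pdf_bound.
    apply: ge0_subset_integral => //.
    - apply/measurable_EFinP; apply: measurable_funM => //.
      exact: measurable_normal_pdf.
    - by move=> x _; rewrite lee_fin mulr_ge0 ?normal_pdf_ge0.
  under eq_integral do rewrite EFinM.
  rewrite ge0_integralZl_EFin//.
  - by rewrite integral_normal_pdf mule1 ltry.
  - by move=> x _; rewrite lee_fin normal_pdf_ge0.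
  - apply/measurable_EFinP; exact: measurable_normal_pdf.
have Pfin : P \is a fin_num by rewrite ge0_fin_numE ?(ltW P0)// (le_lt_trans P1)// ltry.
have I0 : (0 <= I)%E by apply: le_trans IP; rewrite mule_ge0 ?lee_fin ?sqr_ge0 ?ltW.
have Ifin' : I \is a fin_num by rewrite ge0_fin_numE.
rewrite /nu -/P -/I ler_pdivlMr; last by rewrite fine_gt0// P0 (le_lt_trans P1)// ltry.
by rewrite -lee_fin EFinM !fineK.
Qed.
End S7.
Lemma AmB_mono {R : realType} (a y z : R) : 0 < a -> y ^+ 2 <= z ^+ 2 ->
  statA a z - statB z <= statA a y - statB y.
Proof.
move=> a0 yz; have hnu := nu_ge a a0.
have hyz : `|y| <= `|z|.
  by rewrite -ler_sqr ?nnegrE// !real_normK ?num_real.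
have ey : y ^+ 2 = `|y| ^+ 2 by rewrite real_normK ?num_real.
have ez : z ^+ 2 = `|z| ^+ 2 by rewrite real_normK ?num_real.
rewrite /statA /statB !indicE ey ez.
have ny := normr_ge0 y; have nz := normr_ge0 z.
case: (boolP (z \in tail_set a)) => hz; case: (boolP (y \in tail_set a)) => hy;
  rewrite /= ?mulr1 ?mulr0.
- lra.
- have hy' : `|y| < a.
    rewrite ltNge; apply/negP => h; move/negP: hy; apply; exact: mem_set.
  have : `|y| ^+ 2 < a ^+ 2 by rewrite ltr_sqr ?nnegrE// ltW.
  lra.
- have hz' : `|z| < a.
    rewrite ltNge; apply/negP => h; move/negP: hz; apply; exact: mem_set.
  have hy' : a <= `|y| := set_mem hy.
  lra.
- nra.
Qed.

Lemma AmB_meas {R : realType} (a t : R) :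
  measurable [set y : R | statA a y - statB y <= t].
Proof.
have mf : measurable_fun [set: R] (fun y : R => statA a y - statB y).
  apply: measurable_funB; last first.
    by apply: measurable_funB => //; exact: exprn_measurable.
  apply: measurable_funM.
    by apply: measurable_funB => //; exact: exprn_measurable.
  by apply: measurable_indic; exact: tail_meas.
have -> : [set y : R | statA a y - statB y <= t] =
    (fun y : R => statA a y - statB y) @^-1` `]-oo, t]%classic.
  by apply/seteqP; split => x /=; rewrite in_itv.
rewrite -[X in measurable X]setTI; apply: mf => //; exact: measurable_itv.
Qed.

Theorem lemma8 (R : realType) (a theta theta' : R) :
  0 < a -> `|theta| <= `|theta'| ->
  forall t : R, (cdf_AmB a theta t <= cdf_AmB a theta' t)%E.
Proof.
move=> a0 hth t.
have [->|neq] := eqVneq theta theta'; first by [].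
set m := (theta + theta') / 2.
have e : theta' = 2 * m - theta by rewrite /m; field.
have hsq : theta ^+ 2 <= theta' ^+ 2.
  rewrite -(real_normK (num_real theta)) -(real_normK (num_real theta')).
  by rewrite ler_sqr ?nnegrE.
have hm : 0 <= (m - theta) * m.
  have -> : (m - theta) * m = (theta' ^+ 2 - theta ^+ 2) / 4 by rewrite /m; field.
  by rewrite divr_ge0// subr_ge0.
have hmt : m - theta != 0.
  apply/eqP => h; move/eqP: neq; apply; rewrite e; lra.
rewrite /cdf_AmB e; apply: key; first exact: AmB_meas.
move=> y hy; rewrite /= => Uy; apply: le_trans Uy; apply: AmB_mono => //.
have hym : 0 <= (m - theta) * (m - y) by nra.
have : 0 <= m * (m - y).
  have [pos|neg] := ltrP 0 (m - theta).
  - have h1 : 0 <= m by rewrite -(pmulr_rge0 _ pos).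
    have h2 : 0 <= m - y by rewrite -(pmulr_rge0 _ pos).
    exact: mulr_ge0.
  - have neg' : m - theta < 0 by rewrite lt_neqAle hmt neg.
    have h1 : m <= 0 by rewrite -(nmulr_rge0 _ neg').
    have h2 : m - y <= 0 by rewrite -(nmulr_rge0 _ neg').
    exact: mulr_le0.
nra.
Qed.
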